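(* Let $G = (V,E)$ be an $n$-vertex graph. There exists a partition $V = V_1 \cup \ldots \cup V_t$ of $V$ such that: (i) $t \leq 19\,\alpha(G) \log n$; (ii) $\sum_{i \in J} |V_i| \geq n/2$, where $J := \{i \in [t] : |V_i| \geq 0.1\, n/\alpha(G)\}$; (iii) $|V_i| \geq \delta(G)/\log n$ for every $i \in [t]$; (iv) $\kappa(G[V_i]) \geq \frac{\delta(G)}{20\,\alpha(G) \log n}$ for every $i \in [t]$.
   Context: $\alpha(G)$ is the independence number, $\delta(G)$ the minimum degree, and $\kappa(H)$ the vertex connectivity of a graph $H$ (the smallest size of a vertex set whose removal disconnects $H$ or leaves a single vertex). $G[V_i]$ is the induced subgraph. *)

(* Defs.v *)
From mathcomp Require Import all_boot.
From Stdlib Require Import Reals.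
Set Implicit Arguments. Unset Strict Implicit. Unset Printing Implicit Defensive.

Section Graphs.
Variable T : finType.
(* A finite simple graph on vertex set T is a symmetric irreflexive relation e. *)
Variable e : rel T.

Definition induced_rel (W : {set T}) : rel T :=
  fun x y => [&& e x y, x \in W & y \in W].

Definition disconnected_on (W : {set T}) : bool :=
  [exists x in W, exists y in W, ~~ connect (induced_rel W) x y].

Definition separating (W S : {set T}) : bool :=
  (S \subset W) && (disconnected_on (W :\: S) || (#|W :\: S| == 1)).

Definition kappa (W : {set T}) : nat :=
  \big[minn/#|W|]_(S : {set T} | separating W S) #|S|.

Definition independent (S : {set T}) : bool :=
  [forall x in S, forall y in S, ~~ e x y].

Definition alpha : nat := \max_(S : {set T} | independent S) #|S|.

Definition degree (v : T) : nat := #|[set u | e v u]|.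

(* minimum degree delta(G) (the default #|T| is irrelevant when T is nonempty) *)
Definition delta : nat := \big[minn/#|T|]_(v : T) degree v.
End Graphs.

Definition Rleb (x y : R) : bool := if Rle_dec x y then true else false.

(* Main.v *)
Require Import Defs.
From mathcomp Require Import all_boot.
From mathcomp Require Import zify.
From Stdlib Require Import Reals Lra Lia Classical.
Set Implicit Arguments. Unset Strict Implicit. Unset Printing Implicit Defensive.

Local Open Scope R_scope.
Lemma ln_le' x y : 0 < x -> x <= y -> ln x <= ln y.
Proof. intros Hx [H|H]; [left; apply ln_increasing; lra | subst; lra]. Qed.

Lemma ln2_ge : 0.6 <= ln 2.
Proof.
  assert (H1 := exp_ineq1_le (-0.2)).
  assert (H2 : exp 0.2 * exp (-0.2) = 1) by (rewrite <- exp_plus; replace (0.2 + -0.2) with 0 by lra; apply exp_0).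
  assert (Hp : 0 < exp 0.2) by apply exp_pos.
  assert (H3 : exp 0.2 <= 1.25) by nra.
  assert (H4 : exp 0.6 = exp 0.2 * exp 0.2 * exp 0.2) by (rewrite <- !exp_plus; f_equal; lra).
  assert (H5 : exp 0.6 < 2).
  { rewrite H4. assert (exp 0.2 * exp 0.2 <= 1.25 * 1.25) by nra. nra. }
  case: (Rle_or_lt 0.6 (ln 2)) => H //.
  apply exp_increasing in H. rewrite -> exp_ln in H by lra. lra.
Qed.

Lemma ln3_ge : 1 <= ln 3.
Proof.
  case: (Rle_or_lt 1 (ln 3)) => H //.
  apply exp_increasing in H. rewrite -> exp_ln in H by lra. assert (H2 := exp_le_3). lra.
Qed.

Lemma ln8_ge : 1.8 <= ln 8.
Proof.
  replace 8 with (2*2*2) by lra. rewrite -> !ln_mult by lra. assert (H := ln2_ge). lra.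
Qed.
Local Close Scope R_scope.

Lemma bigmin_seq_le (I : eqType) (r : seq I) (F : I -> nat) d i0 :
  i0 \in r -> \big[minn/d]_(i <- r) F i <= F i0.
Proof.
elim: r => [|a r IH] //=; rewrite in_cons big_cons => /orP[/eqP->|h].
  exact: geq_minl.
exact: leq_trans (geq_minr _ _) (IH h).
Qed.

Lemma bigmin_le (I : finType) (P : pred I) (F : I -> nat) d i0 :
  P i0 -> \big[minn/d]_(i | P i) F i <= F i0.
Proof.
move=> Pi0; rewrite -big_filter; apply: bigmin_seq_le.
by rewrite mem_filter Pi0 mem_index_enum.
Qed.

Lemma nat1 a b : a - b = 1 -> a <= b + 1. Proof. lia. Qed.
Lemma nat2 x y a b c : x <= y -> y = a + b - c -> x <= a + b. Proof. lia. Qed.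
Lemma nat3 a p q : a - p <= 0 -> p < q -> q <= a -> False. Proof. lia. Qed.
Lemma nat4 a p q m : a - p <= m.+1 -> p < q -> q <= a -> a - q <= m. Proof. lia. Qed.
Lemma nat5 x1 m1 x2 m2 u i : u = x1 + x2 - i -> x1 <= m1 -> x2 <= m2 -> u <= m1 + m2.
Proof. lia. Qed.
Lemma nat6 d N U B D I S pc : d <= N -> N <= U -> U = B + D - I -> B <= S -> S <= pc ->
  d <= pc + D.
Proof. lia. Qed.
Lemma nat7 dl a d b : dl + 1 <= a + d -> a <= b -> dl + 1 <= b + d. Proof. lia. Qed.

Section Comb.
Variable T : finType.
Variable e : rel T.
Hypothesis e_sym : symmetric e.
Hypothesis e_irr : irreflexive e.
Variable k : R.
Hypothesis k_ge0 : (0 <= k)%R.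

Definition HC (A : {set T}) := (k <= INR #|A|)%R /\
  forall S, separating e A S -> (k <= INR #|S|)%R.

Lemma kappa_ge A : HC A -> (k <= INR (kappa e A))%R.
Proof.
case=> h1 h2; rewrite /kappa.
apply: (big_ind (fun m => (k <= INR m)%R)) => //.
move=> x y hx hy; rewrite /minn; case: (ltnP x y) => h.
  done.
done.
Qed.

Lemma not_HC A : ~ HC A ->
  (INR #|A| < k)%R \/ exists S, separating e A S /\ (INR #|S| < k)%R.
Proof.
move=> h; case: (Rle_or_lt k (INR #|A|)) => h1; last by left.
right; apply: NNPP => h2; apply: h; split => // S hS.
case: (Rle_or_lt k (INR #|S|)) => // h3; exfalso; apply: h2; by exists S.
Qed.

Lemma delta_le v : delta e <= degree e v.
Proof. exact: bigmin_le. Qed.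

Lemma degree_le v : degree e v <= #|T|.-1.
Proof.
rewrite -(cardsC1 v); apply: subset_leq_card; apply/subsetP => u.
rewrite !inE => h; apply/negP => /eqP huv; subst u; by rewrite e_irr in h.
Qed.

Definition sepr (A B : {set T}) : Prop :=
  forall x y, x \in A -> y \in B -> x != y /\ ~~ e x y.

Lemma sepr_sym A B : sepr A B -> sepr B A.
Proof.
move=> h x y hx hy; case: (h y x hy hx) => h1 h2; split.
  by rewrite eq_sym.
by rewrite e_sym.
Qed.

Lemma sepr_sub (A B A' B' : {set T}) : A' \subset A -> B' \subset B -> sepr A B -> sepr A' B'.
Proof.
move=> /subsetP s1 /subsetP s2 h x y hx hy; exact: h (s1 _ hx) (s2 _ hy).
Qed.

Definition Inv (P : {set {set T}}) : Prop :=
  [/\ set0 \notin P,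
      (forall A B, A \in P -> B \in P -> A != B -> sepr A B) &
      (INR #|~: cover P| <= (INR #|P| - 1) * k)%R].

Lemma nbr_in P W v : Inv P -> W \in P -> v \in W -> forall y, e v y ->
  y \in W \/ y \in ~: cover P.
Proof.
case=> _ hs _ hW hv y hy; case: (boolP (y \in cover P)) => hc; last first.
  by right; rewrite inE hc.
move/bigcupP: hc => [B hB yB]; case: (eqVneq W B) => [->|ne]; first by left.
case: (hs _ _ hW hB ne v y hv yB) => _; by rewrite hy.
Qed.

Lemma piece_size P W v : Inv P -> W \in P -> v \in W ->
  delta e + 1 <= #|W| + #|~: cover P|.
Proof.
move=> hI hW hv.
have h1 : [set u | e v u] \subset (W :\ v) :|: ~: cover P.
  apply/subsetP => y; rewrite inE => hy.
  have hyv : y != v by apply/negP => /eqP hyv; subst y; rewrite e_irr in hy.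
  case: (nbr_in hI hW hv hy) => h; rewrite !inE ?hyv /=.
    by rewrite h.
  by move: h; rewrite inE => ->; rewrite orbT.
have h2 := subset_leq_card h1.
have h3 := delta_le v; rewrite /degree in h3.
have h4 := cardsU (W :\ v) (~: cover P).
have h5 := cardsD1 v W; rewrite hv in h5.
lia.
Qed.


Lemma Inv_nonempty P W : Inv P -> W \in P -> exists v, v \in W.
Proof.
case=> h0 _ _ hW; apply/set0Pn; apply/negP => /eqP hW0.
by rewrite -hW0 hW in h0.
Qed.

Lemma card_le_alpha P (x0 : T) : Inv P -> #|P| <= alpha e.
Proof.
move=> hI; case: (hI) => h0 hs _.
pose rep (A : {set T}) := odflt x0 [pick y in A].
have repA A : A \in P -> rep A \in A.
  move=> hA; case: (Inv_nonempty hI hA) => v hv.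
  rewrite /rep; case: pickP => [y hy|h] //=.
  by rewrite h in hv.
have inj : {in P &, injective rep}.
  move=> A B hA hB heq; apply/eqP; apply/negPn/negP => ne.
  case: (hs _ _ hA hB ne (rep A) (rep B) (repA _ hA) (repA _ hB)) => h _.
  by rewrite heq eqxx in h.
rewrite -(card_in_imset inj) /alpha; apply: leq_bigmax_cond.
rewrite /independent; apply/forallP => x; apply/implyP => /imsetP [A hA ->].
apply/forallP => y; apply/implyP => /imsetP [B hB ->].
case: (eqVneq A B) => [->|ne]; first by rewrite e_irr.
by case: (hs _ _ hA hB ne _ _ (repA _ hA) (repA _ hB)).
Qed.

Hypothesis Hk : ((2 * INR (alpha e) - 1) * k <= INR (delta e))%R.

Lemma piece_big P W : Inv P -> W \in P ->
  (k + 1 <= INR #|W|)%R /\ (INR #|~: cover P| <= (INR (alpha e) - 1) * k)%R.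
Proof.
move=> hI hW; case: (Inv_nonempty hI hW) => v hv.
have hsz := piece_size hI hW hv.
have hP := card_le_alpha v hI.
have hP1 : 0 < #|P| by apply/card_gt0P; exists W.
case: hI => _ _ hD.
move/leP/le_INR: hsz; rewrite !plus_INR /= => hsz.
have {}hP : (INR #|P| <= INR (alpha e))%R by apply/le_INR/leP.
have {}hP1 : (1 <= INR #|P|)%R by apply: (le_INR 1); apply/leP.
have h1 : ((INR #|P| - 1) * k <= (INR (alpha e) - 1) * k)%R.
  apply: Rmult_le_compat_r => //; lra.
have h2 : (0 <= (INR (alpha e) - 1) * k)%R.
  apply: Rmult_le_pos; lra.
split; lra.
Qed.


Lemma step P W : Inv P -> W \in P -> ~ HC W ->
  exists P', Inv P' /\ #|P| < #|P'|.
Proof.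
move=> hI hW hHC.
case: (piece_big hI hW) => hbig _.
case: (hI) => h0 hs hD.
case: (not_HC hHC) => [hlt | [S [hS hSk]]]; first by exfalso; lra.
move: hS; rewrite /separating => /andP[sSW /orP[hdis | h1]]; last first.
  exfalso; move/eqP: h1 => h1.
  have hWS : #|W| <= #|S| + 1.
    by apply: nat1; move: h1; rewrite cardsD (setIidPr sSW).
  have : (INR #|W| <= INR (#|S| + 1))%R by apply/le_INR/leP.
  rewrite plus_INR /=; lra.
move/existsP: hdis => [x /andP[xWS /existsP[y /andP[yWS nxy]]]].
pose R := induced_rel e (W :\: S).
pose X := [set z in W :\: S | connect R x z].
pose Y := (W :\: S) :\: X.
have hX z : (z \in X) = (z \in W :\: S) && connect R x z by rewrite /X in_set.
have hY z : (z \in Y) = (z \notin X) && (z \in W :\: S) by rewrite /Y in_setD.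
have xX : x \in X by rewrite hX xWS connect0.
have yY : y \in Y by rewrite hY yWS hX yWS (negbTE nxy).
have noXY z w : z \in X -> w \in Y -> ~~ e z w.
  rewrite hX => /andP[zWS cxz]; rewrite hY => /andP[wnX wWS].
  apply/negP => ezw; move/negP: wnX; apply; rewrite hX wWS /=.
  apply: connect_trans cxz (connect1 _).
  by rewrite /R /induced_rel ezw zWS wWS.
have WSW : W :\: S \subset W by apply/subsetP => z; rewrite in_setD => /andP[].
have XW : X \subset W.
  apply/subsetP => z; rewrite hX => /andP[hz _]; exact: (subsetP WSW).
have YW : Y \subset W.
  apply/subsetP => z; rewrite hY => /andP[_ hz]; exact: (subsetP WSW).
have sXY : sepr X Y.
  move=> z w hz hw; split; last exact: noXY.
  apply/negP => /eqP hzw; subst w; move: hw; by rewrite hY hz.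
have sWB B : B \in P -> B != W -> sepr W B.
  by move=> hB ne; apply: hs => //; rewrite eq_sym.
pose P' := X |: (Y |: (P :\ W)).
have memP' A : (A \in P') = (A == X) || (A == Y) || ((A != W) && (A \in P)).
  by rewrite /P' !in_setU1 in_setD1 orbA.
have ne0 (A : {set T}) z : z \in A -> (set0 == A) = false.
  by move=> hz; apply/negbTE/eqP => h; rewrite -h inE in hz.
have XnY : (X == Y) = false.
  by apply/negbTE/eqP => h; have := yY; rewrite hY h yY.
have XnP : (X != W) && (X \in P) = false.
  apply/negbTE/negP => /andP[ne hXP].
  case: (hs _ _ hXP hW ne x x xX (subsetP XW _ xX)) => h _; by rewrite eqxx in h.
have YnP : (Y != W) && (Y \in P) = false.
  apply/negbTE/negP => /andP[ne hYP].
  case: (hs _ _ hYP hW ne y y yY (subsetP YW _ yY)) => h _; by rewrite eqxx in h.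
have cP' : #|P'| = #|P| + 1.
  rewrite /P' cardsU1 cardsU1 in_setU1 in_setD1 XnY XnP in_setD1 YnP.
  by rewrite (cardsD1 W P) hW /= !add1n addn1.
have subD : ~: cover P' \subset ~: cover P :|: S.
  apply/subsetP => z; rewrite in_setC in_setU in_setC => hz.
  case: (boolP (z \in cover P)) => //= hc; case: (boolP (z \in S)) => // hzS.
  exfalso; move/negP: hz; apply.
  move/bigcupP: hc => [B hB zB]; apply/bigcupP.
  case: (eqVneq B W) => [eqBW|neBW].
    subst B; have zWS : z \in W :\: S by rewrite in_setD hzS zB.
    case: (boolP (z \in X)) => hzX.
      by exists X => //; rewrite memP' eqxx.
    by exists Y; [rewrite memP' eqxx orbT | rewrite hY hzX zWS].
  by exists B => //; rewrite memP' neBW hB !orbT.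
have cD : #|~: cover P'| <= #|~: cover P| + #|S|.
  exact: nat2 (subset_leq_card subD) (cardsU (~: cover P) S).
exists P'; split; last by rewrite cP' addn1.
split.
- by rewrite memP' (ne0 _ _ xX) (ne0 _ _ yY) /= (negbTE h0) andbF.
- move=> A B; rewrite !memP'.
  case/orP => [/orP[/eqP->|/eqP->]|/andP[hAW hAP]];
  case/orP => [/orP[/eqP->|/eqP->]|/andP[hBW hBP]]; rewrite ?eqxx // => ne;
  first [ exact: sXY | exact: (sepr_sym sXY) | exact: hs
        | by apply: sepr_sub XW (subxx _) (sWB _ hBP hBW)
        | by apply: sepr_sub YW (subxx _) (sWB _ hBP hBW)
        | by apply: sepr_sym; apply: sepr_sub XW (subxx _) (sWB _ hAP hAW)
        | by apply: sepr_sym; apply: sepr_sub YW (subxx _) (sWB _ hAP hAW) ].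
- have : (INR #|~: cover P'| <= INR (#|~: cover P| + #|S|))%R by apply/le_INR/leP.
  rewrite plus_INR cP' plus_INR /= => hh.
  have e1 : ((INR #|P| + 1 - 1) * k = (INR #|P| - 1) * k + k)%R by ring.
  rewrite e1; lra.
Qed.


Lemma iter_split m P (x0 : T) : Inv P -> alpha e - #|P| <= m ->
  exists P', Inv P' /\ forall W, W \in P' -> HC W.
Proof.
elim: m P => [|m IH] P hI hm.
  destruct (classic (forall W, W \in P -> HC W)) as [hall|hall]; first by exists P; split.
  case: (not_all_ex_not _ _ hall) => W hW'; have [hW hnHC] := imply_to_and _ _ hW'.
  case: (step hI hW hnHC) => P' [hI' hlt].
  have hP' := card_le_alpha x0 hI'.
  exfalso; exact: nat3 hm hlt hP'.
destruct (classic (forall W, W \in P -> HC W)) as [hall|hall]; first by exists P; split.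
case: (not_all_ex_not _ _ hall) => W hW'; have [hW hnHC] := imply_to_and _ _ hW'.
case: (step hI hW hnHC) => P' [hI' hlt].
have hP' := card_le_alpha x0 hI'.
apply: (IH P' hI'); exact: nat4 hm hlt hP'.
Qed.

Lemma add_vertex A u : HC A -> u \notin A ->
  (k <= INR #|[set w in A | e u w]|)%R -> HC (u |: A).
Proof.
move=> [hA1 hA2] uA hN; split.
  apply: Rle_trans hA1 _; apply/le_INR/leP; apply: subset_leq_card; exact: subsetUr.
move=> S; rewrite /separating => /andP[sS hsep].
case: (Rle_or_lt k (INR #|S|)) => // hSk; exfalso.
case: (boolP (u \in S)) => huS.
- pose S' := S :\ u.
  have eqR : A :\: S' = (u |: A) :\: S.
    apply/setP => z; rewrite !inE; case: (eqVneq z u) => [->|nzu] /=.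
      by rewrite (negbTE uA) huS.
    by [].
  have sS'A : S' \subset A.
    apply/subsetP => z; rewrite in_setD1 => /andP[nzu zS].
    by move: (subsetP sS z zS); rewrite in_setU1 (negbTE nzu).
  have : separating e A S' by rewrite /separating sS'A eqR.
  move/hA2 => h.
  have : (INR #|S'| <= INR #|S|)%R.
    by apply/le_INR/leP; apply: subset_leq_card; apply: subD1set.
  lra.
- have sSA : S \subset A.
    apply/subsetP => z zS; move: (subsetP sS z zS); rewrite in_setU1.
    case/orP => // /eqP hz; subst z; by rewrite zS in huS.
  have [a /andP[aAS eua]] : exists a, (a \in A :\: S) && e u a.
    case: (pickP (fun a => (a \in A :\: S) && e u a)) => [a ha | hnone].
      by exists a.
    have : [set w in A | e u w] \subset S.
      apply/subsetP => w; rewrite inE => /andP[wA euw].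
      move: (hnone w); rewrite /= euw andbT in_setD wA andbT.
      by move/negbFE.
    move/subset_leq_card => h.
    have : (INR #|[set w in A | e u w]| <= INR #|S|)%R by apply/le_INR/leP.
    lra.
  pose R := (u |: A) :\: S.
  pose R0 := A :\: S.
  have R0R : R0 \subset R.
    apply/subsetP => z; rewrite !in_setD in_setU1 => /andP[-> ->]; by rewrite orbT.
  have uR : u \in R by rewrite in_setD huS in_setU1 eqxx.
  have aR : a \in R by apply: (subsetP R0R).
  have n1 : #|R| != 1.
    apply/negP => /cards1P [c hc].
    move: uR aR; rewrite hc !in_set1 => /eqP hu /eqP hac.
    by move: aAS; rewrite in_setD hac -hu (negbTE uA) andbF.
  rewrite (negbTE n1) orbF in hsep.
  have conn0 : ~~ disconnected_on e R0.
    apply/negP => hd.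
    have : separating e A S by rewrite /separating sSA hd.
    move/hA2; lra.
  have symR : symmetric (induced_rel e R).
    move=> p q; rewrite /induced_rel e_sym.
    by case: (p \in R); case: (q \in R); rewrite ?andbT ?andbF.
  have hsym := sym_connect_sym symR.
  have toa z : z \in R -> connect (induced_rel e R) z a.
    case: (eqVneq z u) => [->|nzu] hz.
      by apply: connect1; rewrite /induced_rel eua uR aR.
    have zR0 : z \in R0.
      by move: hz; rewrite !in_setD in_setU1 (negbTE nzu).
    have : connect (induced_rel e R0) z a.
      apply/negPn/negP => hnc; move/negP: conn0; apply.
      apply/existsP; exists z; rewrite zR0 /=; apply/existsP; exists a.
      by rewrite aAS hnc.
    apply: connect_sub => p q; rewrite /induced_rel => /and3P[epq pR qR].
    by apply: connect1; rewrite /induced_rel epq (subsetP R0R _ pR) (subsetP R0R _ qR).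
  move/existsP: hsep => [z /andP[zR /existsP[w /andP[wR nzw]]]].
  move/negP: nzw; apply.
  apply: connect_trans (toa z zR) _.
  by rewrite hsym; apply: toa.
Qed.

Lemma add_set n : forall (U A : {set T}), #|U| = n -> HC A ->
  (forall u, u \in U -> u \notin A /\ (k <= INR #|[set w in A | e u w]|)%R) ->
  HC (A :|: U).
Proof.
elim: n => [|n IH] U A hU hA hu.
  by move/cards0_eq: hU => ->; rewrite setU0.
have [u uU] : exists u, u \in U by apply/card_gt0P; rewrite hU.
have hU' : #|U :\ u| = n by move: (cardsD1 u U); rewrite uU hU add1n => /eqP; rewrite eqSS => /eqP <-.
have h' := IH (U :\ u) A hU' hA (fun v hv => hu v (subsetP (subD1set U u) v hv)).
have -> : A :|: U = u |: (A :|: U :\ u).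
  apply/setP => z; rewrite !inE; case: (eqVneq z u) => [->|nzu] /=.
    by rewrite uU !orbT.
  by [].
apply: add_vertex h' _ _.
  rewrite !inE eqxx /= orbF; exact: (hu u uU).1.
apply: Rle_trans (hu u uU).2 _; apply/le_INR/leP/subset_leq_card/subsetP => w.
by rewrite !inE => /andP[-> ->].
Qed.


Lemma RlebP x y : Rleb x y = true <-> (x <= y)%R.
Proof. by rewrite /Rleb; case: Rle_dec. Qed.

Lemma comb_main (x0 : T) : exists Q : {set {set T}},
  [/\ partition Q [set: T], #|Q| <= alpha e,
      (exists d, (INR d <= (INR (alpha e) - 1) * k)%R /\
         forall B, B \in Q -> delta e + 1 <= #|B| + d) &
      forall B, B \in Q -> HC B].
Proof.
have hI0 : Inv [set [set: T]].
  split.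
  - by rewrite in_set1; apply/negP => /eqP h; move: (in_setT x0); rewrite -h inE.
  - by move=> A B; rewrite !in_set1 => /eqP -> /eqP ->; rewrite eqxx.
  - rewrite cover1 setCT cards0 cards1 /=; lra.
have [P [hI hHC]] := iter_split (m := alpha e) x0 hI0 (leq_subr _ _).
case: (hI) => h0 hs hD.
pose D := ~: cover P.
have hPa := card_le_alpha x0 hI.
have [W0 hW0] : exists W, W \in P.
  case: (set_0Vmem P) => [P0|[W hW]]; last by exists W.
  exfalso; move: hD; rewrite P0 /cover big_set0 setC0 cards0 /= => hD.
  have : (0 < INR #|[set: T]|)%R.
    by apply: (lt_INR 0); apply/ltP; apply/card_gt0P; exists x0.
  lra.
have hP1 : 0 < #|P| by apply/card_gt0P; exists W0.
have [_ hDa] := piece_big hI hW0.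
have hPaR : (INR #|P| <= INR (alpha e))%R by apply/le_INR/leP.
have hP1R : (1 <= INR #|P|)%R by apply: (le_INR 1); apply/leP.
have choose u : u \in D -> exists A, A \in P /\ (k <= INR #|[set w in A | e u w]|)%R.
  move=> uD; apply: NNPP => hno.
  pose t (A : {set T}) := #|[set w in A | e u w]|.
  have hlt A : A \in P -> (INR (t A) < k)%R.
    move=> hA; case: (Rle_or_lt k (INR (t A))) => // h; exfalso; apply: hno; by exists A.
  have hsub : [set w | e u w] \subset (\bigcup_(A in P) [set w in A | e u w]) :|: D.
    apply/subsetP => w; rewrite inE => euw; rewrite in_setU.
    case: (boolP (w \in cover P)) => hc; last by rewrite /D in_setC hc orbT.
    move/bigcupP: hc => [A hA wA]; apply/orP; left; apply/bigcupP; exists A => //.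
    by rewrite inE wA euw.
  have hU : #|\bigcup_(A in P) [set w in A | e u w]| <= \sum_(A in P) t A.
    apply: (big_ind2 (fun (X : {set T}) (m : nat) => #|X| <= m)).
    - by rewrite cards0.
    - move=> X1 m1 X2 m2 h1 h2; exact: nat5 (cardsU X1 X2) h1 h2.
    - by move=> A _; rewrite /t.
  pose c := \max_(A in P) t A.
  have hsum : \sum_(A in P) t A <= #|P| * c.
    rewrite -sum_nat_const; apply: leq_sum => A hA; exact: leq_bigmax_cond.
  have [A0 hA0 hc] := eq_bigmax_cond t hP1.
  have hcR : (INR c < k)%R by rewrite /c hc; apply: hlt.
  have hdel := delta_le u; rewrite /degree in hdel.
  have hsU := subset_leq_card hsub.
  have hcU := cardsU (\bigcup_(A in P) [set w in A | e u w]) D.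
  have htot : delta e <= #|P| * c + #|D| := nat6 hdel hsU hcU hU hsum.
  have : (INR (delta e) <= INR #|P| * INR c + INR #|D|)%R.
    by rewrite -mult_INR -plus_INR; apply/le_INR/leP.
  have h1 : (INR #|P| * INR c < INR #|P| * k)%R by apply: Rmult_lt_compat_l; lra.
  have h2 : (INR #|P| * k <= INR (alpha e) * k)%R by apply: Rmult_le_compat_r.
  move=> hh; rewrite /D in hh; lra.
pose g u := if [pick A in P | u \in A] is Some A then A
            else odflt set0 [pick A in P | Rleb k (INR #|[set w in A | e u w]|)].
have gcore u A : A \in P -> u \in A -> g u = A.
  move=> hA uA; rewrite /g; case: pickP => [B /andP[hB uB]|hn].
    apply/eqP; apply/negPn/negP => ne.
    by case: (hs _ _ hB hA ne u u uB uA); rewrite eqxx.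
  by move: (hn A); rewrite hA uA.
have gD u : u \in D -> g u \in P /\ (k <= INR #|[set w in g u | e u w]|)%R.
  move=> uD; rewrite /g; case: pickP => [B /andP[hB uB] | _].
    by move: uD; rewrite /D in_setC => /negP; case; apply/bigcupP; exists B.
  case: pickP => [B /andP[hB /RlebP hR] | hn] //=.
  case: (choose u uD) => A [hA hk].
  by move: (hn A); rewrite hA /=; move/RlebP: hk => ->.
have gP u : g u \in P.
  case: (boolP (u \in cover P)) => hc.
    by move/bigcupP: hc => [A hA uA]; rewrite (gcore u A hA uA).
  by case: (gD u); rewrite // /D in_setC hc.
pose Q := preim_partition g [set: T].
have hQ : partition Q [set: T] by apply: preim_partitionP.
have blk B : B \in Q -> exists2 A, A \in P & B = [set y | A == g y].
  rewrite /Q /preim_partition /equivalence_partition => /imsetP [x _ ->].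
  exists (g x) => //; apply/setP => y; by rewrite !inE.
exists Q; split => //.
- have sub : Q \subset [set [set y | A == g y] | A in P].
    apply/subsetP => B /blk [A hA ->]; exact: imset_f.
  apply: leq_trans (subset_leq_card sub) _.
  exact: leq_trans (leq_imset_card (fun A => [set y | A == g y]) P) hPa.
- exists #|D|; split => // B /blk [A hA ->].
  case: (Inv_nonempty hI hA) => v hv.
  apply: nat7 (piece_size hI hA hv) _.
  apply/subset_leq_card/subsetP => y hy; by rewrite inE (gcore y A hA hy).
- move=> B /blk [A hA ->].
  have AB : A \subset [set y | A == g y].
    by apply/subsetP => y hy; rewrite inE (gcore y A hA hy).
  have -> : [set y | A == g y] = A :|: ([set y | A == g y] :\: A).
    apply/setP => y; rewrite in_setU in_setD.
    case: (boolP (y \in A)) => hy //=; by rewrite (subsetP AB y hy).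
  apply: (add_set (n := #|[set y | A == g y] :\: A|)) => //; first exact: hHC.
  move=> u; rewrite in_setD inE => /andP[uA /eqP hgu]; split => //.
  have uD : u \in D.
    rewrite /D in_setC; apply/negP => /bigcupP [A' hA' uA'].
    by move: hgu; rewrite (gcore u A' hA' uA') => hAA; subst A'; rewrite uA' in uA.
  by case: (gD u uD); rewrite -hgu.
Qed.

End Comb.

Lemma nat8 n s1 s0 : n = s1 + s0 -> 10 * s0 <= n -> 9 * n <= 10 * s1.
Proof. lia. Qed.

Section Half.
Variable T : finType.
Lemma big_half (Q : {set {set T}}) (c : {set T} -> bool) (a n : nat) :
  0 < a -> #|Q| <= a -> n = \sum_(A in Q) #|A| ->
  (forall A, A \in Q -> ~~ c A -> 10 * a * #|A| < n) ->
  9 * n <= 10 * \sum_(A in Q | c A) #|A|.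
Proof.
move=> ha hQ hn hsm.
move: hn; rewrite (bigID c) /= => hn.
apply: (nat8 hn).
have h1 : \sum_(A in Q | ~~ c A) (10 * a * #|A|) <= \sum_(A in Q | ~~ c A) n.
  by apply: leq_sum => A /andP[hA hc]; apply: ltnW; apply: hsm.
have h2 : \sum_(A in Q | ~~ c A) n <= #|Q| * n.
  rewrite -sum_nat_const (bigID c (fun A => A \in Q)) /=; exact: leq_addl.
rewrite -big_distrr /= in h1.
have h3 : a * (10 * \sum_(A in Q | ~~ c A) #|A|) <= a * n.
  rewrite mulnCA mulnA; apply: leq_trans h1 _; apply: leq_trans h2 _.
  by rewrite leq_mul2r hQ orbT.
by rewrite leq_pmul2l in h3.
Qed.
End Half.

Lemma size_ineq (n d : nat) : 2 <= n -> d < n ->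
  ((105/100) * INR d <= (INR d + 1) * ln (INR n))%R.
Proof.
move=> hn hd.
have hd0 := pos_INR d.
have hnR : (2 <= INR n)%R by apply: (le_INR 2); apply/leP.
have hL2 : (6/10 <= ln (INR n))%R.
  apply: Rle_trans ln2_ge _; apply: ln_le' => //; lra.
case: (leqP n 2) => hn2.
  have hn2' : n = 2 by apply/eqP; rewrite eqn_leq hn2 hn.
  have hd1 : (INR d <= 1)%R by apply: (le_INR d 1); apply/leP; rewrite hn2' in hd.
  nra.
have hL3 : (1 <= ln (INR n))%R.
  apply: Rle_trans ln3_ge _; apply: ln_le' => //; first lra.
  have : (INR 3 <= INR n)%R by apply/le_INR/leP.
  rewrite /=; lra.
case: (leqP d 20) => hd20.
  have : (INR d <= INR 20)%R by apply/le_INR/leP.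
  rewrite /=.
  nra.
have hL8 : (18/10 <= ln (INR n))%R.
  apply: Rle_trans ln8_ge _; apply: ln_le' => //; first lra.
  have : (INR 8 <= INR n)%R.
    apply/le_INR/leP; move: hd hd20; clear; lia.
  rewrite /=; lra.
nra.
Qed.

Theorem lemma2p12 (T : finType) (e : rel T)
  (e_sym : symmetric e) (e_irr : irreflexive e)
  (n_ge2 : 2 <= #|T|) :
  exists P : {set {set T}},
    partition P [set: T] /\
    (INR #|P| <= 19 * INR (alpha e) * ln (INR #|T|))%R /\
    (INR (\sum_(A in P | Rleb (0.1 * INR #|T| / INR (alpha e))%R (INR #|A|)) #|A|)
       >= INR #|T| / 2)%R /\
    (forall A, A \in P -> (INR #|A| >= INR (delta e) / ln (INR #|T|))%R) /\
    (forall A, A \in P ->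
       (INR (kappa e A) >= INR (delta e) / (20 * INR (alpha e) * ln (INR #|T|)))%R).
Proof.
have [x0 _] : exists x : T, x \in [set: T].
  by apply/card_gt0P; rewrite cardsT; apply: leq_trans n_ge2.
set n := #|T|.
set L := ln (INR n).
set a := alpha e.
set dl := delta e.
have ha : 0 < a.
  have hind : independent e [set x0].
    rewrite /independent; apply/forallP => x; apply/implyP; rewrite in_set1 => /eqP ->.
    apply/forallP => y; apply/implyP; rewrite in_set1 => /eqP ->; by rewrite e_irr.
  have := @leq_bigmax_cond _ (independent e) (fun S : {set T} => #|S|) [set x0] hind.
  by rewrite cards1.
have haR : (1 <= INR a)%R by apply: (le_INR 1); apply/leP.
have hnR : (2 <= INR n)%R by apply: (le_INR 2); apply/leP.
have hL : (6/10 <= L)%R by apply: Rle_trans ln2_ge _; apply: ln_le' => //; lra.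
have hdl0 := pos_INR dl.
set k := (INR dl / (20 * INR a * L))%R.
have hden : (0 < 20 * INR a * L)%R by apply: Rmult_lt_0_compat; lra.
have hk0 : (0 <= k)%R.
  by rewrite /k /Rdiv; apply: Rmult_le_pos => //; apply: Rlt_le; apply: Rinv_0_lt_compat.
have hkk : (k * (20 * INR a * L) = INR dl)%R by rewrite /k; field; lra.
have haL : (6/10 * INR a <= INR a * L)%R by nra.
have Hk : ((2 * INR a - 1) * k <= INR dl)%R.
  rewrite -hkk (Rmult_comm k); apply: Rmult_le_compat_r => //; nra.
have [Q [hQ hQa [d [hd hsz]] hHC]] := comb_main e_sym e_irr hk0 Hk x0.
have hdn : dl < n.
  apply: leq_ltn_trans (delta_le e x0) _; apply: leq_ltn_trans (degree_le e_irr x0) _.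
  by rewrite /n prednK //; apply: leq_trans n_ge2.
exists Q; split => //; split; [|split; [|split]].
- have : (INR #|Q| <= INR a)%R by apply/le_INR/leP.
  have : (INR a <= 19 * INR a * L)%R by nra.
  lra.
- have e01 : (0.1 = / 10)%R by rewrite /Q2R /=; field.
  rewrite e01.
  set c := fun A : {set T} => Rleb (/ 10 * INR n / INR a)%R (INR #|A|).
  have hsm : forall A, A \in Q -> ~~ c A -> 10 * a * #|A| < n.
    move=> A hA hc.
    have hlt : (INR #|A| < / 10 * INR n / INR a)%R.
      case: (Rle_or_lt (/ 10 * INR n / INR a) (INR #|A|)) => // h.
      by move/RlebP: h; rewrite /c in hc; rewrite (negbTE hc).
    have h2 := Rmult_lt_compat_r (INR a) _ _ (ltac:(lra)) hlt.
    have e1 : (/ 10 * INR n / INR a * INR a = / 10 * INR n)%R by field; lra.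
    rewrite e1 in h2.
    apply/ltP; apply: INR_lt; rewrite !mult_INR.
    have e10 : INR 10 = 10%R by rewrite /=; lra.
    rewrite e10; lra.
  have hn : n = \sum_(A in Q) #|A| by rewrite /n -cardsT; exact: card_partition.
  have := big_half ha hQa hn hsm.
  move/leP/le_INR => h.
  have h' : (INR (9 * n) <= INR (10 * \sum_(A in Q | c A) #|A|))%R := h.
  rewrite !mult_INR in h'.
  have e9 : INR 9 = 9%R by rewrite /=; lra.
  have e10 : INR 10 = 10%R by rewrite /=; lra.
  rewrite e9 e10 in h'.
  apply: Rle_ge.
  suff hh : (INR n / 2 <= INR (\sum_(A in Q | c A) #|A|))%R by exact: hh.
  lra.
- move=> B hB.
  have hs := hsz B hB.
  have hsR : (INR dl + 1 <= INR #|B| + INR d)%R.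
    by rewrite -(plus_INR dl 1) -plus_INR; apply/le_INR/leP.
  have hsi := size_ineq n_ge2 hdn.
  have hL0 : (0 < L)%R by lra.
  set y := (INR dl / L)%R.
  have hy : (INR dl = y * L)%R by rewrite /y; field; lra.
  have hy2 : ((105/100) * y <= INR dl + 1)%R.
    apply: (Rmult_le_reg_r L) => //; rewrite Rmult_assoc -hy /L; exact: hsi.
  have hak : (INR a * k = y / 20)%R by rewrite /k /y; field; lra.
  have hd2 : (INR d <= (INR a - 1) * k)%R := hd.
  have : (INR d <= INR a * k)%R by lra.
  rewrite hak => hd'.
  apply: Rle_ge; rewrite -/y; lra.
- move=> B hB; apply: Rle_ge; exact: kappa_ge (hHC B hB).
Qed.
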